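(* For any representations $R_1,R_2,R_3$: (1) $d_{\mathrm{repr}}(R_1,R_1)=0$; (2) $d_{\mathrm{repr}}(R_1,R_2)=d_{\mathrm{repr}}(R_2,R_1)$; (3) $d_{\mathrm{repr}}(R_1,R_3)\le d_{\mathrm{repr}}(R_1,R_2)+d_{\mathrm{repr}}(R_2,R_3)$.
   Context: A representation is a chain-structured causal model $U\to v_1\to\cdots\to v_L$ whose hidden variables are real-vector-valued functions of the input (on a task $S$). For representations $R_i$, let $H_i$ be the concatenation (direct sum) of the solutions of all hidden variables of $R_i$, regarded as a function on $S$. Then $d_{\mathrm{repr}}(R_1,R_2)=\max\big(\inf_{\|A\|_{\mathrm{op}}\le1}\|AH_1-H_2\|,\ \inf_{\|B\|_{\mathrm{op}}\le1}\|H_1-BH_2\|\big)$, where the infima are over linear operators of operator norm at most $1$ and $\|\cdot\|$ is a direct-sum norm. *)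

(* Defs.v *)
From HB Require Import structures.
From mathcomp Require Import all_boot all_order all_algebra.
From mathcomp Require Import classical_sets reals.
Set Implicit Arguments. Unset Strict Implicit. Unset Printing Implicit Defensive.
Import Order.TTheory GRing.Theory Num.Theory.
Local Open Scope ring_scope.
Local Open Scope classical_set_scope.

(* A representation on a (finite) task S: a chain-structured causal model
   U -> v_1 -> ... -> v_L.  Layer i (0-based) has dimension [dim i];
   the mechanism of v_1 maps the input to R^{dim 0}, and the mechanism of
   v_{i+2} maps R^{dim i} to R^{dim (i+1)}. *)
Record representation (R : realType) (S : finType) := Representation {
  depth : nat;
  dim : nat -> nat;
  mech0 : S -> 'rV[R]_(dim 0);
  mech : forall i : nat, 'rV[R]_(dim i) -> 'rV[R]_(dim i.+1)
}.

Fixpoint solution (R : realType) (S : finType) (Rp : representation R S)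
    (i : nat) : S -> 'rV[R]_(dim Rp i) :=
  match i with
  | 0 => @mech0 R S Rp
  | i'.+1 => fun x => @mech R S Rp i' (solution Rp i' x)
  end.

Definition tdim (R : realType) (S : finType) (Rp : representation R S) : nat :=
  (\sum_(i < depth Rp) dim Rp i)%N.

Definition Hcat (R : realType) (S : finType) (Rp : representation R S)
  (x : S) : 'rV[R]_(tdim Rp) :=
  \mxrow_(i < depth Rp) solution Rp i x.

Definition vnorm (R : realType) (n : nat) (v : 'rV[R]_n) : R :=
  Num.sqrt (\sum_(j < n) v ord0 j ^+ 2).

(* Operator norm at most 1 (w.r.t. Euclidean norms); A acts on row vectors
   by right multiplication. *)
Definition opnorm_le1 (R : realType) (m n : nat) (A : 'M[R]_(m, n)) : Prop :=
  forall v : 'rV[R]_m, vnorm (v *m A) <= vnorm v.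

Definition fnorm (R : realType) (S : finType) (n : nat) (H : S -> 'rV[R]_n) : R :=
  Num.sqrt (\sum_(x : S) \sum_(j < n) H x ord0 j ^+ 2).

Definition dfit (R : realType) (S : finType) (m n : nat)
  (H1 : S -> 'rV[R]_m) (H2 : S -> 'rV[R]_n) : R :=
  inf [set fnorm (fun x => H1 x *m A - H2 x) | A in [set A : 'M[R]_(m, n) | opnorm_le1 A]].

Definition dfit' (R : realType) (S : finType) (m n : nat)
  (H1 : S -> 'rV[R]_m) (H2 : S -> 'rV[R]_n) : R :=
  inf [set fnorm (fun x => H1 x - H2 x *m B) | B in [set B : 'M[R]_(n, m) | opnorm_le1 B]].

Definition d_repr (R : realType) (S : finType) (R1 R2 : representation R S) : R :=
  Num.max (dfit (Hcat R1) (Hcat R2)) (dfit' (Hcat R1) (Hcat R2)).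

(* Main.v *)
Require Import Defs.
From mathcomp Require Import all_boot all_order all_algebra.
From mathcomp Require Import classical_sets reals.
From mathcomp Require Import ring lra.
Import Order.TTheory GRing.Theory Num.Theory.
Local Open Scope ring_scope.

Section Aux.
Variable R : realType.

Lemma sumsq_ge0 (I : finType) (a : I -> R) : 0 <= \sum_i a i ^+ 2.
Proof. by apply: sumr_ge0 => i _; rewrite sqr_ge0. Qed.

Lemma lagrange (I : finType) (a b : I -> R) :
  \sum_i \sum_j (a i * b j - a j * b i) ^+ 2 =
  2 * ((\sum_i a i ^+ 2) * (\sum_i b i ^+ 2) - (\sum_i a i * b i) ^+ 2).
Proof.
have E : forall i j, (a i * b j - a j * b i) ^+ 2 =
   (a i ^+ 2 * b j ^+ 2 + a j ^+ 2 * b i ^+ 2) - 2 * ((a i * b i) * (a j * b j)).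
  by move=> i j; ring.
under eq_bigr => i _ do under eq_bigr => j _ do rewrite E.
under eq_bigr => i _ do rewrite sumrB big_split /=.
rewrite sumrB big_split /=.
have H1 : \sum_i \sum_j a i ^+ 2 * b j ^+ 2 = (\sum_i a i ^+ 2) * (\sum_i b i ^+ 2).
  by rewrite big_distrl; apply: eq_bigr => i _; rewrite big_distrr.
have H2 : \sum_i \sum_j a j ^+ 2 * b i ^+ 2 = (\sum_i a i ^+ 2) * (\sum_i b i ^+ 2).
  by rewrite exchange_big.
have H3 : \sum_i \sum_j 2 * (a i * b i * (a j * b j)) = 2 * (\sum_i a i * b i) ^+ 2.
  rewrite expr2 big_distrl big_distrr /=; apply: eq_bigr => i _.
  by rewrite big_distrr big_distrr /=; apply: eq_bigr => j _.
apply: (@etrans _ _ ((\sum_i a i ^+ 2) * (\sum_i b i ^+ 2) + (\sum_i a i ^+ 2) * (\sum_i b i ^+ 2)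
   - 2 * (\sum_i a i * b i) ^+ 2)); last first.
  have r : forall x y : R, x + x - 2 * y = 2 * (x - y) by move=> x y; ring.
  exact: r.
by congr (_ + _ - _); [exact: H1 | exact: H2 | exact: H3].
Qed.

Lemma minkowski (I : finType) (a b : I -> R) :
  Num.sqrt (\sum_i (a i + b i) ^+ 2) <=
  Num.sqrt (\sum_i a i ^+ 2) + Num.sqrt (\sum_i b i ^+ 2).
Proof.
set SA := \sum_i a i ^+ 2; set SB := \sum_i b i ^+ 2.
set SAB := \sum_i a i * b i.
have hA : 0 <= SA := @sumsq_ge0 _ a.
have hB : 0 <= SB := @sumsq_ge0 _ b.
have hS : 0 <= \sum_i (a i + b i) ^+ 2 := @sumsq_ge0 _ _.
have CS : SAB ^+ 2 <= SA * SB.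
  have := @lagrange _ a b; rewrite -/SA -/SB -/SAB => L.
  have : 0 <= \sum_i \sum_j (a i * b j - a j * b i) ^+ 2.
    by apply: sumr_ge0 => i _; apply: sumr_ge0 => j _; rewrite sqr_ge0.
  rewrite L; lra.
have ES : \sum_i (a i + b i) ^+ 2 = SA + SB + 2 * SAB.
  rewrite /SA /SB /SAB -big_split /= big_distrr -big_split /=.
  by apply: eq_bigr => i _; ring.
have u0 := sqrtr_ge0 SA; have v0 := sqrtr_ge0 SB.
have w0 := sqrtr_ge0 (\sum_i (a i + b i) ^+ 2).
have u2 := sqr_sqrtr hA; have v2 := sqr_sqrtr hB; have w2 := sqr_sqrtr hS.
move: u0 v0 w0 u2 v2 w2 CS ES.
set u := Num.sqrt SA; set v := Num.sqrt SB; set w := Num.sqrt _.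
move=> u0 v0 w0 u2 v2 w2 CS ES.
have uv0 : 0 <= u * v by apply: mulr_ge0.
have Huv : SAB <= u * v.
  case: (lerP SAB 0) => [h|h]; first lra.
  rewrite -(ler_pXn2r (n:=2)) //; last by rewrite nnegrE ltW.
  by rewrite exprMn u2 v2.
have : w ^+ 2 <= (u + v) ^+ 2.
  rewrite w2 ES; have -> : (u + v) ^+ 2 = u ^+ 2 + v ^+ 2 + 2 * (u * v) by ring.
  rewrite u2 v2; lra.
by rewrite ler_pXn2r // nnegrE addr_ge0.
Qed.

Variable S : finType.

Lemma fnorm_ge0 n (F : S -> 'rV[R]_n) : 0 <= fnorm F.
Proof. exact: sqrtr_ge0. Qed.

Lemma fnorm_ext n (F G : S -> 'rV[R]_n) : (forall x, F x = G x) -> fnorm F = fnorm G.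
Proof. by move=> h; rewrite /fnorm; congr Num.sqrt; apply: eq_bigr => x _; rewrite h. Qed.

Lemma fnorm_pair n (F : S -> 'rV[R]_n) :
  fnorm F = Num.sqrt (\sum_(p : S * 'I_n) F p.1 ord0 p.2 ^+ 2).
Proof. by rewrite /fnorm pair_bigA. Qed.

Lemma fnormD n (F G : S -> 'rV[R]_n) :
  fnorm (fun x => F x + G x) <= fnorm F + fnorm G.
Proof.
rewrite !fnorm_pair.
under eq_bigr => p _ do rewrite mxE.
exact: minkowski.
Qed.

Lemma fnormBC n (F G : S -> 'rV[R]_n) :
  fnorm (fun x => F x - G x) = fnorm (fun x => G x - F x).
Proof.
rewrite /fnorm; congr Num.sqrt; apply: eq_bigr => x _; apply: eq_bigr => j _.
by rewrite !mxE -sqrrN opprB.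
Qed.

Lemma vnorm_sq n (v : 'rV[R]_n) : vnorm v ^+ 2 = \sum_j v ord0 j ^+ 2.
Proof. by rewrite sqr_sqrtr // sumsq_ge0. Qed.

Lemma fnormM m n (F : S -> 'rV[R]_m) (B : 'M[R]_(m, n)) :
  opnorm_le1 B -> fnorm (fun x => F x *m B) <= fnorm F.
Proof.
move=> hB; rewrite /fnorm ler_sqrt; last first.
  by apply: sumr_ge0 => x _; apply: sumsq_ge0.
apply: ler_sum => x _; rewrite -!vnorm_sq.
by rewrite ler_pXn2r // nnegrE sqrtr_ge0.
Qed.

Lemma opnorm0 m n : opnorm_le1 (0 : 'M[R]_(m, n)).
Proof.
move=> v; rewrite mulmx0 /vnorm.
rewrite big1 ?sqrtr0 ?sqrtr_ge0 // => j _; rewrite mxE expr0n.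
by [].
Qed.

Lemma opnorm1 n : opnorm_le1 (1%:M : 'M[R]_n).
Proof. by move=> v; rewrite mulmx1. Qed.

Lemma opnormM m n p (A : 'M[R]_(m, n)) (B : 'M[R]_(n, p)) :
  opnorm_le1 A -> opnorm_le1 B -> opnorm_le1 (A *m B).
Proof. by move=> hA hB v; rewrite mulmxA; apply: le_trans (hB _) (hA _). Qed.

Lemma inf_le_img T (P : set T) (f : T -> R) a :
  (forall t, P t -> 0 <= f t) -> P a -> inf [set f t | t in P] <= f a.
Proof.
move=> h0 Pa; apply: ge_inf; last by exists a.
by exists 0 => _ [t Pt <-]; apply: h0.
Qed.

Lemma le_inf_img T (P : set T) (f : T -> R) c a :
  P a -> (forall t, P t -> c <= f t) -> c <= inf [set f t | t in P].
Proof.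
move=> Pa h; apply: lb_le_inf; first by exists (f a), a.
by move=> _ [t Pt <-]; apply: h.
Qed.

Lemma dfit_ge0 m n (H1 : S -> 'rV[R]_m) (H2 : S -> 'rV[R]_n) : 0 <= dfit H1 H2.
Proof. by apply: (@le_inf_img _ _ _ _ 0); [exact: opnorm0 | move=> t _; apply: fnorm_ge0]. Qed.

Lemma dfit_refl n (H : S -> 'rV[R]_n) : dfit H H = 0.
Proof.
apply/eqP; rewrite eq_le dfit_ge0 andbT.
have -> : 0 = fnorm (fun x => H x *m 1%:M - H x).
  rewrite /fnorm big1 ?sqrtr0 // => x _; rewrite big1 // => j _.
  by rewrite mulmx1 subrr mxE expr0n.
by apply: inf_le_img; [move=> t _; apply: fnorm_ge0 | exact: opnorm1].
Qed.

Lemma dfit'E m n (H1 : S -> 'rV[R]_m) (H2 : S -> 'rV[R]_n) :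
  dfit' H1 H2 = dfit H2 H1.
Proof.
rewrite /dfit' /dfit; congr inf; apply: eq_imagel => B _; exact: fnormBC.
Qed.

Lemma dfit_tri m n p (H1 : S -> 'rV[R]_m) (H2 : S -> 'rV[R]_n) (H3 : S -> 'rV[R]_p) :
  dfit H1 H3 <= dfit H1 H2 + dfit H2 H3.
Proof.
have key : forall A B, opnorm_le1 A -> opnorm_le1 B ->
    dfit H1 H3 <= fnorm (fun x => H1 x *m A - H2 x) + fnorm (fun x => H2 x *m B - H3 x).
  move=> A B hA hB.
  have h := @inf_le_img _ [set C : 'M[R]_(m, p) | opnorm_le1 C]
    (fun C => fnorm (fun x => H1 x *m C - H3 x)) (A *m B) (fun t _ => fnorm_ge0 _ _) (@opnormM _ _ _ A B hA hB).
  apply: (le_trans h).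
  rewrite (@fnorm_ext _ _ (fun x => (H1 x *m A - H2 x) *m B + (H2 x *m B - H3 x))); last first.
    by move=> x; rewrite mulmxBl mulmxA addrA subrK.
  apply: le_trans (fnormD _ _ _) _; rewrite lerD2r.
  exact: fnormM.
have h1 : forall B, opnorm_le1 B ->
    dfit H1 H3 - fnorm (fun x => H2 x *m B - H3 x) <= dfit H1 H2.
  move=> B hB; apply: (@le_inf_img _ _ _ _ 0); first exact: opnorm0.
  by move=> A hA; rewrite lerBlDr; apply: key.
have : dfit H1 H3 - dfit H1 H2 <= dfit H2 H3.
  apply: (@le_inf_img _ _ _ _ 0); first exact: opnorm0.
  by move=> B hB; rewrite lerBlDr addrC -lerBlDr; apply: h1.
lra.
Qed.

End Aux.

Theorem lemmaG2 (R : realType) (S : finType) (R1 R2 R3 : representation R S) :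
  [/\ d_repr R1 R1 = 0,
      d_repr R1 R2 = d_repr R2 R1 &
      d_repr R1 R3 <= d_repr R1 R2 + d_repr R2 R3].
Proof.
rewrite /d_repr !dfit'E; split.
- by rewrite dfit_refl maxxx.
- by rewrite maxC.
- rewrite ge_max; apply/andP; split.
  + apply: le_trans (@dfit_tri _ _ _ _ _ (Hcat R1) (Hcat R2) (Hcat R3)) _.
    by apply: lerD; rewrite le_max lexx.
  + apply: le_trans (@dfit_tri _ _ _ _ _ (Hcat R3) (Hcat R2) (Hcat R1)) _.
    by rewrite addrC; apply: lerD; rewrite le_max lexx ?orbT.
Qed.
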